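(* Let $X$ be an infinite compact metrizable space and $h\colon X\to X$ a minimal homeomorphism. If $F\subset X$ is closed and topologically $h$-small, then $F$ is universally null.
   Context: $M_h(X)$ denotes the set of $h$-invariant Borel probability measures on $X$; a Borel set is universally null if it has measure $0$ for all $\mu\in M_h(X)$. A closed set $F\subset X$ is topologically $h$-small if there is $m\in\mathbb{Z}_{+}$ such that whenever $d(0),\dots,d(m)$ are $m+1$ distinct integers, $h^{d(0)}(F)\cap\cdots\cap h^{d(m)}(F)=\varnothing$. *)

(* Defs.v *)
From HB Require Import structures.
From mathcomp Require Import all_boot all_order all_algebra.
From mathcomp Require Import all_classical all_reals all_analysis.
Set Implicit Arguments. Unset Strict Implicit. Unset Printing Implicit Defensive.
Import Order.TTheory GRing.Theory Num.Theory.
Local Open Scope classical_set_scope.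
Local Open Scope ring_scope.

Definition homeomorphism_with {X : topologicalType} (h g : X -> X) : Prop :=
  cancel h g /\ cancel g h /\ continuous h /\ continuous g.

Definition minimal_map {X : topologicalType} (h : X -> X) : Prop :=
  forall Y : set X, closed Y -> h @` Y = Y -> Y = set0 \/ Y = setT.

Definition zpow_map {X : Type} (h g : X -> X) (d : int) : X -> X :=
  match d with
  | Posz n => iter n h
  | Negz n => iter n.+1 g
  end.

Definition top_small {X : topologicalType} (h g : X -> X) (F : set X) : Prop :=
  closed F /\
  exists m : nat, forall d : 'I_m.+1 -> int, injective d ->
    \bigcap_(i in [set: 'I_m.+1]) (zpow_map h g (d i) @` F) = set0.

Definition borel_of (X : ptopologicalType) := g_sigma_algebraType (@open X).

Definition invariant_prob {R : realType} {X : ptopologicalType} (h : X -> X)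
  (mu : probability (borel_of X) R) : Prop :=
  forall A : set (borel_of X), measurable A -> mu (h @^-1` A) = mu A.

Definition universally_null {R : realType} {X : ptopologicalType} (h : X -> X)
  (F : set X) : Prop :=
  forall mu : probability (borel_of X) R, invariant_prob h mu -> mu F = 0%E.

(* Main.v *)
Require Import Defs.
From HB Require Import structures.
From mathcomp Require Import all_boot all_order all_algebra.
From mathcomp Require Import all_classical all_reals all_analysis.
From mathcomp Require Import measurable_realfun lebesgue_integral.
Import Order.TTheory GRing.Theory Num.Theory.
Local Open Scope classical_set_scope.

Section S.
Variables (R : realType) (X : pseudoPMetricType R) (h g : X -> X).
Hypothesis hg : cancel h g.
Hypothesis gh : cancel g h.
Hypothesis hc : continuous h.

Lemma iter_cancel n x : iter n g (iter n h x) = x.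
Proof.
elim: n x => // n IH x; rewrite iterSr iterS hg; exact: IH.
Qed.
Lemma iter_cancel' n x : iter n h (iter n g x) = x.
Proof.
elim: n x => // n IH x; rewrite iterSr iterS gh; exact: IH.
Qed.

Lemma image_preimage n (F : set X) : iter n g @` F = iter n h @^-1` F.
Proof.
apply/seteqP; split => x /=.
  by move=> [y Fy <-]; rewrite iter_cancel'.
by move=> Fx; exists (iter n h x) => //; rewrite iter_cancel.
Qed.

Lemma iter_cont n : continuous (iter n h).
Proof.
elim: n => [|n IH] x /=; first exact: cvg_id.
exact: (continuous_comp (IH x) (hc _)).
Qed.

Lemma closed_meas (C : set X) : closed C -> measurable (C : set (borel_of X)).
Proof.
move=> cC; rewrite -[C]setCK; apply: measurableC.
by apply: sub_sigma_algebra; exact: closed_openC.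
Qed.
End S.
Lemma count_small (R : realType) (X : Type) (m N : nat) (A : nat -> set X)
  (B : int -> set X)
  (hAB : forall k, B (Negz k) = A k)
  (Hm : forall d : 'I_m.+1 -> int, injective d ->
    \bigcap_(i in [set: 'I_m.+1]) B (d i) = set0) x :
  (\sum_(k < N) \1_(A k) x <= (m%:R : R))%R.
Proof.
rewrite (eq_bigr (fun k : 'I_N => if x \in A k then 1%R else 0%R)); last first.
  by move=> k _; rewrite indicE; case: (x \in A k).
rewrite -big_mkcond /= sumr_const.
set S := [set k : 'I_N | `[< A k x >]]%SET.
rewrite (_ : #|_| = #|S|); last first.
  by apply: eq_card => k; rewrite !inE.
rewrite ler_nat leqNgt; apply/negP => HS.
pose e := [seq val k | k <- enum S].
have se : size e = #|S| by rewrite size_map -cardE.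
have ue : uniq e by rewrite map_inj_uniq ?enum_uniq //; exact: val_inj.
pose d (i : 'I_m.+1) := Negz (nth 0%N e i).
have di : injective d.
  move=> i j [] /eqP; rewrite nth_uniq ?se //; first by move/eqP/val_inj.
    by apply: leq_trans HS; rewrite ltnS -ltnS.
  by apply: leq_trans HS; rewrite ltnS -ltnS.
have := Hm d di; apply/eqP/set0P; exists x => i _.
rewrite /d hAB.
have : nth 0%N e i \in e by rewrite mem_nth // se (leq_trans _ HS).
by move=> /mapP [k]; rewrite mem_enum inE => /asboolP Ak ->.
Qed.

Theorem corollary3p12 (R : realType) (X : pseudoPMetricType R) (h g : X -> X)
  (F : set X) :
  hausdorff_space X -> compact [set: X] -> ~ finite_set [set: X] ->
  homeomorphism_with h g -> minimal_map h ->
  top_small h g F -> universally_null (R := R) h F.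
Proof.
move=> _ _ _ [hg [gh [hc gc]]] _ [cF [m Hm]] mu inv.
pose A k := iter k.+1 h @^-1` F.
have cA k : closed (A k).
  by move/continuous_closedP: (@iter_cont _ _ h hc k.+1); apply.
have mA k : measurable (A k : set (borel_of X)) by apply: closed_meas.
have mF : measurable (F : set (borel_of X)) by apply: closed_meas.
have invA k : mu (A k) = mu F.
  rewrite /A; elim: k.+1 => [|n IH] //.
  have -> : iter n.+1 h @^-1` F = h @^-1` (iter n h @^-1` F).
    by apply/funext => x; rewrite /preimage /= -iterS iterSr.
  rewrite -IH; apply: inv; apply: closed_meas.
  by move/continuous_closedP: (@iter_cont _ _ h hc n); apply.
have cnt N x : (\sum_(k < N) \1_(A k) x <= (m%:R : R))%R.
  apply: (@count_small R X m N A (fun d => zpow_map h g d @` F)) => // k.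
  by rewrite /= (@image_preimage _ _ h g hg gh).
have bound N : ((N%:R)%:E * mu F <= (m%:R)%:E)%E.
  have mI k : measurable_fun setT (EFin \o (\1_(A k) : borel_of X -> R)%R).
    by apply/measurable_EFinP; exact: measurable_indic.
  have E1 : ((\int[mu]_(x in setT) (\sum_(k < N) (\1_(A k) x)%:E)
             = (N%:R)%:E * mu F)%E)%R.
    rewrite ge0_integral_sum //; last by move=> k; exact: mI.
    under eq_bigr do rewrite integral_indic // setIT.
    rewrite (eq_bigr (fun=> mu F)); last by move=> k _; exact: invA.
    by rewrite sumr_const card_ord mule_natl.
  rewrite -E1 (_ : (m%:R)%:E = \int[mu]_(x in setT) (cst (m%:R)%:E x))%E%R;
    last first.
      rewrite integral_cst //; transitivity (((m%:R : R)%:E * 1)%E); first by rewrite mule1.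
      f_equal; exact: (esym (probability_setT mu)).
  apply: ge0_le_integral => //.
  move=> x _; apply: sume_ge0 => k _.
    by rewrite lee_fin indicE; case: (x \in A k).
  by apply: emeasurable_sum => k; exact: mI.
  by move=> x _; rewrite sumEFin lee_fin cnt.
have ge0 : (0 <= mu F)%E := measure_ge0 mu F.
have fin : mu F \is a fin_num.
  rewrite ge0_fin_numE //; apply: (le_lt_trans (probability_le1 mu mF)).
  exact: ltry.
move: bound ge0; rewrite -(fineK fin).
set r := fine (mu F) => bound.
rewrite lee_fin le0r => /orP [/eqP -> //| r0].
exfalso.
pose N := (Num.Def.trunc ((m%:R : R) / r)).+1.
have := bound N; rewrite -EFinM lee_fin.
have : ((m%:R : R) / r < N%:R)%R := truncnS_gt _.
rewrite ltr_pdivrMr // => H1 H2.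
by have := lt_le_trans H1 H2; rewrite ltxx.
Qed.
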